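(* Let $\mathcal{I}=\{1,\dots,\mathbf{I}\}$ be a nonempty finite index set, $\{n^i, i\in\mathcal{I}\}$ a finite collection of $d$-dimensional vectors of unit length, $\beta=(\beta_1,\dots,\beta_{\mathbf{I}})'\in\mathbb{R}^{\mathbf{I}}$, and $G_i=\{x\in\mathbb{R}^d:\langle n^i,x\rangle>\beta_i\}$ for $i\in\mathcal{I}$. Suppose $G=\bigcap_{i\in\mathcal{I}} G_i$ is a nonempty domain (so $\overline{G}$ is a convex polyhedron) and that $\partial G_i\cap\partial G\neq\emptyset$ for each $i\in\mathcal{I}$. Then: (a) for each $\varepsilon\in(0,1)$ there exists $R(\varepsilon)>0$ such that for each $i\in\mathcal{I}$, $x\in\partial G_i\cap\partial G$ and $y\in\overline{G}$ with $\|x-y\|<R(\varepsilon)$, we have $\langle n^i, y-x\rangle\ge -\varepsilon\|x-y\|$; and (b) the function $D:[0,\infty)\to[0,\infty]$ defined by $D(0)=0$ and, for $r>0$, $$D(r)=\sup_{\emptyset\neq\mathcal{J}\subset\mathcal{I}}\ \sup\Big\{\operatorname{dist}\Big(x,\bigcap_{j\in\mathcal{J}}(\partial G_j\cap\partial G)\Big): x\in\bigcap_{j\in\mathcal{J}}U_r(\partial G_j\cap\partial G)\Big\}$$ satisfies $D(r)\to 0$ as $r\to 0$.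
   Context: $U_r(S)=\{x\in\mathbb{R}^d:\operatorname{dist}(x,S)\le r\}$ (with $U_r(\emptyset)=\emptyset$), $\operatorname{dist}(x,\emptyset)=\infty$, and the supremum over an empty set is taken to be zero. $\overline{G}$ is the closure and $\partial G$ the boundary of $G$. *)

(* Defs.v *)
From HB Require Import structures.
From mathcomp Require Import all_boot all_order all_algebra.
From mathcomp Require Import all_classical all_reals all_analysis.
Set Implicit Arguments. Unset Strict Implicit. Unset Printing Implicit Defensive.
Import Order.TTheory GRing.Theory Num.Theory.
Import numFieldNormedType.Exports.
Local Open Scope classical_set_scope.
Local Open Scope ring_scope.

(* Points of R^d are row vectors 'rV[R]_d (whose topology is the product,
   i.e. Euclidean, topology). *)

Definition inner (R : realType) (d : nat) (u v : 'rV[R]_d) : R :=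
  \sum_(k < d) u ord0 k * v ord0 k.

Definition enorm (R : realType) (d : nat) (u : 'rV[R]_d) : R :=
  Num.sqrt (inner u u).

Definition boundary (T : topologicalType) (A : set T) : set T :=
  closure A `\` interior A.

Definition domain (T : topologicalType) (A : set T) : Prop :=
  A !=set0 /\ open A /\ connected A.

(* dist(x, S) in [0, +oo], with dist(x, set0) = +oo *)
Definition edist (R : realType) (d : nat) (x : 'rV[R]_d) (S : set 'rV[R]_d)
  : \bar R := ereal_inf [set (enorm (x - y))%:E | y in S].

(* U_r(S) = {x : dist(x,S) <= r}; empty when S is empty *)
Definition Unbhd (R : realType) (d : nat) (r : R) (S : set 'rV[R]_d)
  : set 'rV[R]_d := [set x | (edist x S <= r%:E)%E].

(* supremum with the convention sup(empty) = 0 (all sets used are of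
   nonnegative values, so this is sup of A together with 0) *)
Definition esup0 (R : realType) (A : set (\bar R)) : \bar R :=
  ereal_sup (A `|` [set 0%E]).

Definition halfspace (R : realType) (d : nat) (n : 'rV[R]_d) (b : R)
  : set 'rV[R]_d := [set x | b < inner n x].

Definition polyG (R : realType) (d I : nat) (n : 'I_I -> 'rV[R]_d)
  (beta : 'I_I -> R) : set 'rV[R]_d :=
  \bigcap_(i in [set: 'I_I]) halfspace (n i) (beta i).

Definition face (R : realType) (d I : nat) (n : 'I_I -> 'rV[R]_d)
  (beta : 'I_I -> R) (i : 'I_I) : set 'rV[R]_d :=
  boundary (halfspace (n i) (beta i)) `&` boundary (polyG n beta).

Definition Dfun (R : realType) (d I : nat) (n : 'I_I -> 'rV[R]_d)
  (beta : 'I_I -> R) (r : R) : \bar R :=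
  if r == 0 then 0%E else
  esup0 [set s | exists J : {set 'I_I}, J != finset.set0 /\
     s = esup0 [set edist x (\bigcap_(j in [set j | j \in J]) face n beta j)
               | x in \bigcap_(j in [set j | j \in J]) Unbhd r (face n beta j)]].

(* Main.v *)
Require Import Defs.
From HB Require Import structures.
From mathcomp Require Import all_boot all_order all_algebra.
From mathcomp Require Import all_classical all_reals all_analysis.
From mathcomp Require Import ring lra.
Import Order.TTheory GRing.Theory Num.Theory.
Import numFieldNormedType.Exports.
Local Open Scope classical_set_scope.
Local Open Scope ring_scope.

Definition cval {R : pzRingType} (d : nat) (c : (nat -> R) * R) (x : nat -> R) : R :=
  \sum_(i < d) c.1 i * x i - c.2.

Lemma cvalS {R : pzRingType} d (c : (nat -> R) * R) x :
  cval d.+1 c x = cval d c x + c.1 d * x d.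
Proof. by rewrite /cval big_ord_recr /= addrAC. Qed.

Lemma list_bound {R : realFieldType} {T : Type} (f : T -> R) (s : list T) :
  exists K, 0 <= K /\ forall c, List.In c s -> f c <= K.
Proof.
elim: s => [|a s [K [K0 hK]]]; first by exists 0; split.
exists (`|f a| + K); split; first by rewrite addr_ge0.
move=> c /= [<-|cs]; first by have := ler_norm (f a); lra.
have := hK c cs; have := normr_ge0 (f a); lra.
Qed.

Lemma clamp {R : realFieldType} {T U : Type} (lo : T -> R) (P : list T)
  (hi : U -> R) (N : list U) (t eps : R) :
  0 <= eps ->
  (forall p n, List.In p P -> List.In n N -> lo p <= hi n) ->
  (forall p, List.In p P -> lo p - eps <= t) ->
  (forall n, List.In n N -> t <= hi n + eps) ->
  exists s, (forall p, List.In p P -> lo p <= s) /\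
            (forall n, List.In n N -> s <= hi n) /\ `|t - s| <= eps.
Proof.
move=> e0 hPN hP hN.
have [m [tm [mP mor]]] : exists m, t <= m /\ (forall p, List.In p P -> lo p <= m) /\
   (m = t \/ exists p, List.In p P /\ m = lo p).
  elim: P hPN hP => [|a P IH] hPN hP.
    by exists t; split => //; split => //; left.
  have [m [tm [mP mor]]] := IH (fun p n pP nN => hPN p n (or_intror pP) nN)
     (fun p pP => hP p (or_intror pP)).
  exists (Num.max (lo a) m); split; first by rewrite le_max tm orbT.
  split.
  + move=> p /= [<-|pP]; first by rewrite le_max lexx.
    by rewrite le_max mP ?orbT.
  + case: (leP (lo a) m) => _; last by right; exists a; split => //=; left.
    case: mor => [->|[p [pP ->]]]; first by left.
    by right; exists p; split => //=; right.
have [s [sm [sN sor]]] : exists s, s <= m /\ (forall n, List.In n N -> s <= hi n) /\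
   (s = m \/ exists n, List.In n N /\ s = hi n).
  elim: N hPN hN => [|a N IH] hPN hN.
    by exists m; split => //; split => //; left.
  have [s [sm [sN sor]]] := IH (fun p n pP nN => hPN p n pP (or_intror nN))
     (fun n nN => hN n (or_intror nN)).
  exists (Num.min (hi a) s); split; first by rewrite ge_min sm orbT.
  split.
  + move=> n /= [<-|nN]; first by rewrite ge_min lexx.
    by rewrite ge_min sN ?orbT.
  + case: (leP (hi a) s) => _; first by right; exists a; split => //=; left.
    case: sor => [->|[n [nN ->]]]; first by left.
    by right; exists n; split => //=; right.
exists s; split.
  move=> p pP; case: sor => [->|[n [nN ->]]]; first exact: mP.
  exact: hPN.
split => //.
rewrite distrC ler_distl; apply/andP; split.
  case: sor => [->|[n [nN ->]]]; first lra.
  have := hN n nN; lra.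
case: mor => [mt|[p [pP mp]]]; first lra.
have := hP p pP; lra.
Qed.

Lemma cval_diff {R : realFieldType} d (c : (nat -> R) * R) x y B :
  (forall i, (i < d)%N -> `|x i - y i| <= B) ->
  `|cval d c x - cval d c y| <= (\sum_(i < d) `|c.1 i|) * B.
Proof.
move=> hB.
have -> : cval d c x - cval d c y = \sum_(i < d) c.1 i * (x i - y i).
  have -> : forall a b e : R, a - e - (b - e) = a - b by move=> *; ring.
  by rewrite -sumrB; apply: eq_bigr => i _; ring.
rewrite mulr_suml; apply: le_trans (ler_norm_sum _ _ _) _.
apply: ler_sum => i _; rewrite normrM; apply: ler_wpM2l => //; exact: hB.
Qed.

Lemma L1 {R : realFieldType} (a w t del : R) : 0 < a -> - del <= w + a * t ->
  - (del / a) <= w / a + t.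
Proof.
move=> a0 h.
have : (- del) / a <= (w + a * t) / a by rewrite ler_pM2r ?invr_gt0.
by rewrite mulrDl mulNr mulrAC divff ?mul1r // lt0r_neq0.
Qed.

Lemma L2 {R : realFieldType} (a w t del : R) : a < 0 -> - del <= w + a * t ->
  w / a + t <= - (del / a).
Proof.
move=> a0 h.
have : (w + a * t) / a <= (- del) / a by rewrite ler_nM2r ?invr_lt0.
by rewrite mulrDl mulNr mulrAC divff ?mul1r // ltr0_neq0.
Qed.

Lemma cval_comb {R : realFieldType} d (p n : (nat -> R) * R) x :
  cval d ((fun i => p.1 i / p.1 d - n.1 i / n.1 d), p.2 / p.1 d - n.2 / n.1 d) x =
  cval d p x / p.1 d - cval d n x / n.1 d.
Proof.
rewrite /cval /=.
under eq_bigr => i _ do rewrite mulrBl (mulrAC (p.1 i)) (mulrAC (n.1 i)).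
rewrite sumrB -!mulr_suml; ring.
Qed.

Lemma FM {R : realFieldType} (d : nat) : forall s : list ((nat -> R) * R),
  exists H del0, 0 <= H /\ 0 < del0 /\
  forall del x, 0 <= del -> del < del0 ->
    (forall c, List.In c s -> - del <= cval d c x) ->
    exists y : nat -> R, (forall c, List.In c s -> 0 <= cval d c y) /\
      (forall i, (i < d)%N -> `|x i - y i| <= H * del).
Proof.
elim: d => [|d IH] s.
  case: (pselect (exists c, List.In c s /\ 0 < c.2)) => [[c [cs c2]]|nc].
    exists 0, c.2; split => //; split => // del x del0 dlt h.
    have := h c cs; rewrite /cval big_ord0 => hh.
    have : False by lra.
    by [].
  exists 0, 1; split => //; split => // del x _ _ _; exists x; split => // c cs.
  rewrite /cval big_ord0 sub0r oppr_ge0 leNgt; apply/negP => h; apply: nc.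
  by exists c.
pose P := List.filter (fun c : (nat -> R) * R => 0 < c.1 d) s.
pose N := List.filter (fun c : (nat -> R) * R => c.1 d < 0) s.
pose Z := List.filter (fun c : (nat -> R) * R => c.1 d == 0) s.
pose comb := fun p n : (nat -> R) * R =>
  ((fun i => p.1 i / p.1 d - n.1 i / n.1 d), p.2 / p.1 d - n.2 / n.1 d).
pose s' := List.app Z (List.flat_map (fun p => List.map (comb p) N) P).
have [H' [del0' [H'0 [d0' IHs]]]] := IH s'.
have [K1 [K10 hK1]] := list_bound (fun c : (nat -> R) * R => `|(c.1 d)^-1|) s.
have [M [M0 hM]] := list_bound
  (fun c : (nat -> R) * R => (\sum_(i < d) `|c.1 i|) * `|(c.1 d)^-1|) s.
pose K := 2 * K1 + 1.
pose E := K1 + M * (H' * K).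
have K0 : 0 < K by rewrite /K; lra.
have E0 : 0 <= E by rewrite /E addr_ge0 // mulr_ge0 // mulr_ge0 // ltW.
exists (H' * K + E), (del0' / K).
split; first by rewrite addr_ge0 // mulr_ge0 // ltW.
split; first by rewrite divr_gt0.
move=> del x del_ge0 del_lt hx.
have Kdel : K * del < del0' by rewrite mulrC -ltr_pdivlMr.
have Kd0 : 0 <= K * del by rewrite mulr_ge0 // ltW.
have inP : forall c, List.In c P -> List.In c s /\ 0 < c.1 d.
  by move=> c; rewrite List.filter_In.
have inN : forall c, List.In c N -> List.In c s /\ c.1 d < 0.
  by move=> c; rewrite List.filter_In.
have hxs' : forall c, List.In c s' -> - (K * del) <= cval d c x.
  move=> c; rewrite List.in_app_iff => -[cZ|].
    move: cZ; rewrite List.filter_In => -[cs /eqP c0].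
    have := hx c cs; rewrite cvalS c0 mul0r addr0.
    have : del <= K * del by rewrite ler_peMl // /K; lra.
    lra.
  rewrite List.in_flat_map => -[p [/inP [ps pd]]].
  rewrite List.in_map_iff => -[n [<- /inN [ns nd]]].
  rewrite cval_comb.
  have hp0 := hx p ps; rewrite cvalS in hp0.
  have hn0 := hx n ns; rewrite cvalS in hn0.
  have hp := @L1 _ _ _ _ _ pd hp0.
  have hn := @L2 _ _ _ _ _ nd hn0.
  have h1 : (p.1 d)^-1 <= K1.
    by apply: le_trans (hK1 p ps); exact: ler_norm.
  have h2 : - (n.1 d)^-1 <= K1.
    by apply: le_trans (hK1 n ns); rewrite -normrN; exact: ler_norm.
  have h3 : del * (p.1 d)^-1 <= del * K1 by apply: ler_wpM2l.
  have h4 : del * (- (n.1 d)^-1) <= del * K1 by apply: ler_wpM2l.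
  rewrite /K.
  move: hp hn h3 h4 => /=; lra.
have [y' [y's y'd]] := IHs (K * del) x Kd0 Kdel hxs'.
have key : forall c, List.In c s ->
    `|cval d c x / c.1 d - cval d c y' / c.1 d| <= M * (H' * (K * del)).
  move=> c cs; rewrite -mulrBl normrM.
  have hd := @cval_diff _ d c x y' _ y'd.
  apply: le_trans (_ : (\sum_(i < d) `|c.1 i|) * (H' * (K * del)) * `|(c.1 d)^-1| <= _).
    by apply: ler_wpM2r.
  rewrite mulrAC; apply: ler_wpM2r; last exact: hM.
  by rewrite mulr_ge0.
have hPN : forall p n, List.In p P -> List.In n N -> (fun p : (nat -> R) * R => - (cval d p y' / p.1 d)) p <= (fun n : (nat -> R) * R => - (cval d n y' / n.1 d)) n.
  move=> p n pP nN.
  have : List.In (comb p n) s'.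
    rewrite List.in_app_iff; right; rewrite List.in_flat_map; exists p; split => //.
    by rewrite List.in_map_iff; exists n.
  move/y's; rewrite cval_comb; lra.
have hPl : forall p, List.In p P -> (fun p : (nat -> R) * R => - (cval d p y' / p.1 d)) p - E * del <= x d.
  move=> p /inP [ps pd].
  have hp0 := hx p ps; rewrite cvalS in hp0.
  have hp := @L1 _ _ _ _ _ pd hp0.
  have := key p ps; rewrite ler_norml => /andP [k1 k2].
  have h1 : (p.1 d)^-1 <= K1.
    by apply: le_trans (hK1 p ps); exact: ler_norm.
  have h3 : del * (p.1 d)^-1 <= del * K1 by apply: ler_wpM2l.
  move: hp h3 k1 k2; rewrite /E /=; lra.
have hNu : forall n, List.In n N -> x d <= (fun n : (nat -> R) * R => - (cval d n y' / n.1 d)) n + E * del.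
  move=> n /inN [ns nd].
  have hn0 := hx n ns; rewrite cvalS in hn0.
  have hn := @L2 _ _ _ _ _ nd hn0.
  have := key n ns; rewrite ler_norml => /andP [k1 k2].
  have h2 : - (n.1 d)^-1 <= K1.
    by apply: le_trans (hK1 n ns); rewrite -normrN; exact: ler_norm.
  have h4 : del * (- (n.1 d)^-1) <= del * K1 by apply: ler_wpM2l.
  move: hn h4 k1 k2; rewrite /E /=; lra.
have [s0 [s0P [s0N s0d]]] := @clamp _ _ _ _ P _ N (x d) (E * del) (mulr_ge0 E0 del_ge0) hPN hPl hNu.
exists (fun i => if i == d then s0 else y' i); split.
  move=> c cs; rewrite cvalS eqxx.
  have -> : cval d c (fun i => if i == d then s0 else y' i) = cval d c y'.
    rewrite /cval; congr (_ - _); apply: eq_bigr => i _.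
    by rewrite (ltn_eqF (ltn_ord i)).
  case: (ltgtP (c.1 d) 0) => hc.
  - have hN : List.In c N by rewrite List.filter_In; split.
    have := s0N c hN.
    rewrite -(ler_nM2l hc) mulrN mulrCA mulfV ?mulr1; last exact: ltr0_neq0.
    lra.
  - have hP : List.In c P by rewrite List.filter_In; split.
    have := s0P c hP.
    rewrite -(ler_pM2l hc) mulrN mulrCA mulfV ?mulr1; last exact: lt0r_neq0.
    lra.
  - have hZ : List.In c s' by rewrite List.in_app_iff; left; rewrite List.filter_In hc eqxx.
    by rewrite hc mul0r addr0; exact: y's.
move=> i; rewrite ltnS leq_eqVlt => /orP [/eqP ->|hi].
  rewrite eqxx; apply: le_trans s0d _.
  have : 0 <= H' * K * del by rewrite !mulr_ge0 // ltW.
  lra.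
rewrite (ltn_eqF hi); apply: le_trans (y'd i hi) _.
have : 0 <= E * del by rewrite mulr_ge0.
rewrite mulrA; lra.
Qed.

Lemma mul_self_ge0 {R : realType} (x : R) : 0 <= x * x.
Proof. by rewrite -expr2 sqr_ge0. Qed.

Lemma innerD {R : realType} {d : nat} (n u v : 'rV[R]_d) :
  inner n (u + v) = inner n u + inner n v.
Proof. by rewrite /inner -big_split; apply: eq_bigr => k _; rewrite mxE mulrDr. Qed.

Lemma innerZ {R : realType} {d : nat} (n u : 'rV[R]_d) (t : R) :
  inner n (t *: u) = t * inner n u.
Proof. by rewrite /inner mulr_sumr; apply: eq_bigr => k _; rewrite mxE mulrCA. Qed.

Lemma innerN {R : realType} {d : nat} (n u : 'rV[R]_d) : inner n (- u) = - inner n u.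
Proof. by rewrite /inner -sumrN; apply: eq_bigr => k _; rewrite mxE mulrN. Qed.

Lemma innerB {R : realType} {d : nat} (n u v : 'rV[R]_d) :
  inner n (u - v) = inner n u - inner n v.
Proof. by rewrite innerD innerN. Qed.

Lemma coord_le_norm {R : realType} {d : nat} (u : 'rV[R]_d) k : `|u ord0 k| <= `|u|.
Proof.
have /mapP[j Hj ->] : `|u ord0 k| \in [seq `|u x.1 x.2| | x : 'I_1 * 'I_d].
  by apply/mapP; exists (ord0, k) => //=; rewrite mem_enum.
by rewrite [leRHS]/Num.norm /= mx_normrE; apply/bigmax_geP; right => /=; exists j.
Qed.

Lemma inner_bound {R : realType} {d : nat} (n u : 'rV[R]_d) m :
  (forall k, `|u ord0 k| <= m) -> `|inner n u| <= (\sum_k `|n ord0 k|) * m.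
Proof.
move=> hm; rewrite /inner mulr_suml; apply: le_trans (ler_norm_sum _ _ _) _.
by apply: ler_sum => k _; rewrite normrM; apply: ler_wpM2l.
Qed.

Lemma sum_ge_term {R : realType} {d : nat} (F : 'I_d -> R) i :
  (forall j, 0 <= F j) -> F i <= \sum_j F j.
Proof. by move=> h; rewrite (bigD1 i) //= lerDl sumr_ge0. Qed.

Lemma enorm_ge0 {R : realType} {d : nat} (u : 'rV[R]_d) : 0 <= enorm u.
Proof. exact: sqrtr_ge0. Qed.

Lemma coord_le_enorm {R : realType} {d : nat} (u : 'rV[R]_d) k : `|u ord0 k| <= enorm u.
Proof.
rewrite -sqrtr_sqr /enorm ler_sqrt; last by rewrite /inner sumr_ge0 // => j _; exact: mul_self_ge0.
rewrite /inner expr2; apply: (@sum_ge_term _ _ (fun j => u ord0 j * u ord0 j)).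
by move=> j; exact: mul_self_ge0.
Qed.

Lemma enorm_le_sum {R : realType} {d : nat} (u : 'rV[R]_d) :
  enorm u <= \sum_k `|u ord0 k|.
Proof.
have S0 : 0 <= \sum_k `|u ord0 k| by rewrite sumr_ge0.
rewrite -[leRHS]ger0_norm // -sqrtr_sqr /enorm ler_sqrt ?sqr_ge0 //.
rewrite expr2 [X in _ <= X]mulr_suml /inner; apply: ler_sum => k _.
apply: le_trans (_ : `|u ord0 k| * `|u ord0 k| <= _); first by rewrite -normrM ler_norm.
by apply: ler_wpM2l => //; apply: (@sum_ge_term _ _ (fun j => `|u ord0 j|)).
Qed.

Lemma closure_ge {R : realType} {d : nat} (n y : 'rV[R]_d) b :
  closure (halfspace n b) y -> b <= inner n y.
Proof.
move=> cl; rewrite leNgt; apply/negP => hy.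
set S := \sum_k `|n ord0 k|.
have S0 : 0 <= S by rewrite sumr_ge0.
have e0 : 0 < (b - inner n y) / (S + 1) by rewrite divr_gt0 //; lra.
have [z [hz bz]] := cl _ (nbhsx_ballx y _ e0).
move: bz; rewrite -ball_normE /= => bz.
have := @inner_bound _ _ n (z - y) `|z - y| (fun k => @coord_le_norm _ _ (z - y) k).
rewrite innerB -/S => hb.
have h1 : S * `|z - y| <= S * ((b - inner n y) / (S + 1)).
  by apply: ler_wpM2l => //; rewrite distrC ltW.
have h2 : S * ((b - inner n y) / (S + 1)) < b - inner n y.
  rewrite mulrA ltr_pdivrMr; last lra.
  have : 0 < b - inner n y by lra.
  move=> h; nra.
move: hz; rewrite /halfspace /= => hz.
move: hb; rewrite ler_norml => /andP [_ hb]; lra.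
Qed.

Lemma gt_interior {R : realType} {d : nat} (n y : 'rV[R]_d) b :
  b < inner n y -> interior (halfspace n b) y.
Proof.
move=> hy; rewrite /interior /=; apply/nbhs_ballP.
set S := \sum_k `|n ord0 k|.
have S0 : 0 <= S by rewrite sumr_ge0.
have e0 : 0 < (inner n y - b) / (S + 1) by rewrite divr_gt0 //; lra.
exists ((inner n y - b) / (S + 1)) => // z; rewrite -ball_normE /= => bz.
have := @inner_bound _ _ n (z - y) `|z - y| (fun k => @coord_le_norm _ _ (z - y) k).
rewrite innerB -/S => hb.
have h1 : S * `|z - y| <= S * ((inner n y - b) / (S + 1)).
  by apply: ler_wpM2l => //; rewrite distrC ltW.
have h2 : S * ((inner n y - b) / (S + 1)) < inner n y - b.
  rewrite mulrA ltr_pdivrMr; last lra.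
  have : 0 < inner n y - b by lra.
  move=> h; nra.
rewrite /halfspace /=.
move: hb; rewrite ler_norml => /andP [hb _]; lra.
Qed.

Lemma seg_closure {R : realType} {d I : nat} (n : 'I_I -> 'rV[R]_d) beta g y :
  polyG n beta g -> (forall k, beta k <= inner (n k) y) ->
  closure (polyG n beta) y.
Proof.
move=> hg hy B /nbhs_ballP [e e0 sB].
have a0 : 0 <= `|g - y| by [].
set t := e / (`|g - y| + e).
have ae : 0 < `|g - y| + e := ltr_wpDl a0 e0.
have t0 : 0 < t by rewrite divr_gt0.
have t1 : t <= 1.
  by rewrite ler_pdivrMr // mul1r; exact: ler_wpDl a0 (lexx e).
have tn : t * `|g - y| < e.
  by rewrite mulrAC ltr_pdivrMr // ltr_pM2l // ltrDl.
exists (y + t *: (g - y)); split.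
  move=> k _; rewrite /halfspace /= innerD innerZ innerB.
  have := hg k Logic.I; rewrite /halfspace /= => hk.
  have := hy k; nra.
apply: sB; rewrite -ball_normE /= opprD addrA subrr add0r normrN normrZ ger0_norm //.
exact: ltW.
Qed.

Arguments seg_closure {R d I n beta g y}.

Lemma polyG_sub {R : realType} {d I : nat} (n : 'I_I -> 'rV[R]_d) beta k :
  polyG n beta `<=` halfspace (n k) (beta k).
Proof. by move=> z hz; exact: hz k Logic.I. Qed.
Arguments polyG_sub {R d I n beta} k.

Lemma face_char {R : realType} {d I : nat} (n : 'I_I -> 'rV[R]_d) beta i x :
  face n beta i x -> inner (n i) x = beta i /\ forall k, beta k <= inner (n k) x.
Proof.
move=> [[cli nint] [clG _]].
have hk : forall k, beta k <= inner (n k) x.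
  by move=> k; apply: closure_ge; exact: (closureS (polyG_sub k) clG).
split => //; apply/eqP; rewrite eq_le hk andbT leNgt; apply/negP => h.
apply: nint. apply: gt_interior. exact: h.
Qed.

Arguments face_char {R d I n beta i x}.

Lemma face_intro {R : realType} {d I : nat} (n : 'I_I -> 'rV[R]_d) beta g i y :
  polyG n beta g -> (forall k, beta k <= inner (n k) y) -> inner (n i) y = beta i ->
  face n beta i y.
Proof.
move=> hg hy hi.
have cl := seg_closure hg hy.
split; split.
- exact: (closureS (polyG_sub i)).
- by move=> /interior_subset; rewrite /halfspace /= hi ltxx.
- exact: cl.
- by move=> /interior_subset /(polyG_sub i); rewrite /halfspace /= hi ltxx.
Qed.

Arguments face_intro {R d I n beta g i y}.
Arguments closure_ge {R d n y b}.

Lemma partA {R : realType} {d I : nat} (n : 'I_I -> 'rV[R]_d) beta :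
  forall eps : R, 0 < eps < 1 ->
     exists Reps : R, 0 < Reps /\
       forall (i : 'I_I) (x y : 'rV[R]_d),
         face n beta i x -> closure (polyG n beta) y ->
         enorm (x - y) < Reps ->
         - (eps * enorm (x - y)) <= inner (n i) (y - x).
Proof.
move=> eps /andP [e0 _]; exists 1; split => // i x y fx cy _.
have [hx _] := face_char fx.
have hy := closure_ge (closureS (polyG_sub i) cy).
rewrite innerB hx.
have : 0 <= eps * enorm (x - y) by rewrite mulr_ge0 ?enorm_ge0 // ltW.
lra.
Qed.

Definition cv {R : realType} {d : nat} (x : 'rV[R]_d) : nat -> R :=
  fun i => if insub i is Some k then x ord0 k else 0.

Lemma cvE {R : realType} {d : nat} (x : 'rV[R]_d) (k : 'I_d) : cv x k = x ord0 k.
Proof. by rewrite /cv valK. Qed.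

Lemma mem_In {T : eqType} (x : T) (s : seq T) : x \in s -> List.In x s.
Proof.
elim: s => [|a s IH] //; rewrite inE => /orP [/eqP ->|h]; [left|right; exact: IH h].
by [].
Qed.

Lemma In_mem {T : eqType} (x : T) (s : seq T) : List.In x s -> x \in s.
Proof.
elim: s => [|a s IH] //= [->|h]; rewrite inE; first by rewrite eqxx.
by rewrite IH ?orbT.
Qed.

Lemma unif {R : realType} {T : finType} (P : T -> R -> Prop) :
  (forall t, exists dl, 0 < dl /\ P t dl) ->
  (forall t a b, 0 < a -> a <= b -> P t b -> P t a) ->
  exists dl, 0 < dl /\ forall t, P t dl.
Proof.
move=> hP mono.
suff [dl [dl0 hdl]] : exists dl, 0 < dl /\ forall t, t \in enum T -> P t dl.
  by exists dl; split => // t; apply: hdl; rewrite mem_enum.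
elim: (enum T) => [|a s [dl [dl0 hdl]]]; first by exists 1.
have [da [da0 hda]] := hP a.
exists (Num.min da dl); split; first by rewrite lt_min da0 dl0.
move=> t; rewrite inE => /orP [/eqP ->|ts].
  by apply: mono hda; rewrite ?lt_min ?da0 ?dl0 // ge_min lexx.
by apply: mono (hdl t ts); rewrite ?lt_min ?da0 ?dl0 // ge_min lexx orbT.
Qed.

Definition sJ {R : realType} {d I : nat} (n : 'I_I -> 'rV[R]_d) (beta : 'I_I -> R)
  (J : {set 'I_I}) : list ((nat -> R) * R) :=
  List.app (List.map (fun k => (cv (n k), beta k)) (enum 'I_I))
           (List.map (fun j => ((fun i => - cv (n j) i), - beta j)) (enum J)).

Lemma cval1 {R : realType} {d : nat} (a x : 'rV[R]_d) b :
  cval d (cv a, b) (cv x) = inner a x - b.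
Proof. by rewrite /cval /inner /=; congr (_ - _); apply: eq_bigr => i _; rewrite !cvE. Qed.

Lemma cval2 {R : realType} {d : nat} (a x : 'rV[R]_d) b :
  cval d ((fun i => - cv a i), - b) (cv x) = b - inner a x.
Proof.
rewrite /cval /inner /= -sumrN opprK addrC; congr (_ + _).
by apply: eq_bigr => i _; rewrite !cvE mulNr.
Qed.

Lemma cvalr1 {R : realType} {d : nat} (a : 'rV[R]_d) b (y : nat -> R) :
  cval d (cv a, b) y = inner a (\row_(k < d) y k) - b.
Proof. by rewrite /cval /inner /=; congr (_ - _); apply: eq_bigr => i _; rewrite !cvE mxE. Qed.

Lemma cvalr2 {R : realType} {d : nat} (a : 'rV[R]_d) b (y : nat -> R) :
  cval d ((fun i => - cv a i), - b) y = b - inner a (\row_(k < d) y k).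
Proof.
rewrite /cval /inner /= -sumrN opprK addrC; congr (_ + _).
by apply: eq_bigr => i _; rewrite !cvE mxE mulNr.
Qed.

Lemma perJ {R : realType} {d I : nat} (n : 'I_I -> 'rV[R]_d) beta g e :
  polyG n beta g -> 0 < e -> forall J : {set 'I_I},
  exists dl, 0 < dl /\ forall r, 0 < r -> r < dl -> J != finset.set0 ->
    forall x, (forall j, j \in J -> (Defs.edist x (face n beta j) <= r%:E)%E) ->
    (Defs.edist x (\bigcap_(j in [set j | j \in J]) face n beta j) <= e%:E)%E.
Proof.
move=> hg e0 J.
have [H [del0 [H0 [d00 hFM]]]] := FM d (sJ n beta J).
set S := \sum_k \sum_i `|n k ord0 i|.
have S0 : 0 <= S by rewrite sumr_ge0 // => k _; rewrite sumr_ge0.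
have Sk : forall k, \sum_i `|n k ord0 i| <= S.
  by move=> k; apply: (@sum_ge_term _ _ (fun k => \sum_i `|n k ord0 i|)) => j; rewrite sumr_ge0.
set C := 2 * (S + 1).
have C0 : 0 < C by rewrite /C; lra.
set Cst := d%:R * H * C.
have Cst0 : 0 <= Cst by rewrite /Cst; apply: mulr_ge0; [apply: mulr_ge0 => //; exact: ler0n | exact: ltW].
exists (Num.min (del0 / C) (e / (Cst + 1))); split.
  by rewrite lt_min !divr_gt0 //; lra.
move=> r r0; rewrite lt_min => /andP [rl1 rl2] Jne x hx.
case/set0Pn: Jne => j0 j0J.
have near : forall j, j \in J -> exists y, face n beta j y /\ enorm (x - y) < 2 * r.
  move=> j jJ.
  have : (Defs.edist x (face n beta j) < (2 * r)%:E)%E.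
    by apply: le_lt_trans (hx j jJ) _; rewrite lte_fin; lra.
  move/ereal_inf_lt => [_ [y fy <-]]; rewrite lte_fin => hy.
  by exists y.
have viol : forall k (y : 'rV[R]_d), enorm (x - y) < 2 * r ->
    `|inner (n k) x - inner (n k) y| <= C * r.
  move=> k y hy; rewrite -innerB.
  have := @inner_bound _ _ (n k) (x - y) _ (fun i => coord_le_enorm (x - y) i).
  move=> hib; apply: le_trans hib _.
  have h1 := Sk k.
  have h2 : (\sum_i `|n k ord0 i|) * enorm (x - y) <= S * (2 * r).
    apply: le_trans (_ : (\sum_i `|n k ord0 i|) * (2 * r) <= _).
      by apply: ler_wpM2l; [rewrite sumr_ge0 | exact: ltW].
    by apply: ler_wpM2r => //; lra.
  rewrite /C; nra.
have [y0 [fy0 hy0]] := near j0 j0J.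
have [_ y0k] := face_char fy0.
have Cr0 : 0 <= C * r by rewrite mulr_ge0 // ltW.
have Crl : C * r < del0 by rewrite mulrC -ltr_pdivlMr.
have hyp : forall c, List.In c (sJ n beta J) -> - (C * r) <= cval d c (cv x).
  move=> c; rewrite List.in_app_iff => -[].
    rewrite List.in_map_iff => -[k [<- _]]; rewrite cval1.
    have := viol k y0 hy0; rewrite ler_norml => /andP [v1 v2].
    have := y0k k; lra.
  rewrite List.in_map_iff => -[j [<- /In_mem]]; rewrite mem_enum => jJ; rewrite cval2.
  have [yj [fyj hyj]] := near j jJ.
  have [yje _] := face_char fyj.
  have := viol j yj hyj; rewrite ler_norml => /andP [v1 v2]; lra.
have [yf [yfc yfd]] := hFM (C * r) (cv x) Cr0 Crl hyp.
set yr := \row_(k < d) yf k.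
have yk : forall k, beta k <= inner (n k) yr.
  move=> k; have := yfc (cv (n k), beta k).
  rewrite cvalr1 subr_ge0; apply; rewrite List.in_app_iff; left.
  by rewrite List.in_map_iff; exists k; split => //; apply: mem_In; rewrite mem_enum.
have yj : forall j, j \in J -> inner (n j) yr = beta j.
  move=> j jJ; have := yfc ((fun i => - cv (n j) i), - beta j).
  rewrite cvalr2 subr_ge0 => h; apply/eqP; rewrite eq_le yk andbT; apply: h.
  rewrite List.in_app_iff; right.
  by rewrite List.in_map_iff; exists j; split => //; apply: mem_In; rewrite mem_enum.
apply: ge_ereal_inf; exists (enorm (x - yr))%:E.
  exists yr => //= j jJ.
  exact: face_intro hg yk (yj j jJ).
rewrite lee_fin; apply: le_trans (enorm_le_sum _) _.
have hb : forall k : 'I_d, `|(x - yr) ord0 k| <= H * (C * r).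
  by move=> k; rewrite !mxE -cvE; apply: yfd.
apply: le_trans (ler_sum _ (fun k _ => hb k)) _.
rewrite sumr_const card_ord -mulr_natr.
have : r * (Cst + 1) <= e by rewrite -ler_pdivlMr; [exact: ltW | lra].
rewrite /Cst => h; nra.
Qed.

Theorem lemmaA3 (R : realType) (d I : nat) (n : 'I_I -> 'rV[R]_d)
  (beta : 'I_I -> R) :
  (0 < I)%N ->
  (forall i, enorm (n i) = 1) ->
  domain (polyG n beta) ->
  (forall i, face n beta i !=set0) ->
  (forall eps : R, 0 < eps < 1 ->
     exists Reps : R, 0 < Reps /\
       forall (i : 'I_I) (x y : 'rV[R]_d),
         face n beta i x -> closure (polyG n beta) y ->
         enorm (x - y) < Reps ->
         - (eps * enorm (x - y)) <= inner (n i) (y - x))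
  /\
  (forall e : R, 0 < e -> exists delta : R, 0 < delta /\
     forall r : R, 0 <= r < delta -> (Dfun n beta r <= e%:E)%E).
Proof.
move=> _ _ [[g hg] _] _; split; first exact: partA.
move=> e e0.
have [dl [dl0 hdl]] := @unif R {set 'I_I} (fun J dl => forall r, 0 < r -> r < dl ->
    J != finset.set0 ->
    forall x, (forall j, j \in J -> (Defs.edist x (face n beta j) <= r%:E)%E) ->
    (Defs.edist x (\bigcap_(j in [set j | j \in J]) face n beta j) <= e%:E)%E)
  (@perJ _ _ _ n beta g e hg e0) (fun t a b a0 ab h r r0 ra => h r r0 (lt_le_trans ra ab)).
exists dl; split => // r /andP [r0 rlt].
rewrite /Dfun; case: eqP => [_|rn0]; first by rewrite lee_fin ltW.
have rpos : 0 < r by rewrite lt_neqAle eq_sym r0 andbT; apply/eqP.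
rewrite /esup0; apply: ge_ereal_sup => z [[J [Jne ->]]|->]; last by rewrite lee_fin ltW.
apply: ge_ereal_sup => w [[x hx <-]|->]; last by rewrite lee_fin ltW.
apply: (hdl J r rpos rlt Jne x) => j jJ.
exact: hx j jJ.
Qed.
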